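(* Fix $n\ge 1$ and a coalition size $s\in\{1,\ldots,n\}$. Let the periodic canonical increment arrays of size $s$ be listed in some fixed order as $\underline{t}_1,\ldots,\underline{t}_K$ (where $K=|\mathcal{P}(n,s)|$), let $d_j=n\,\pi(\underline{t}_j)/s$, and let $h_1=0$, $h_j=\sum_{i=1}^{j-1}d_i$. Say agent $x\in\{1,\ldots,n\}$ is designated for $\underline{t}_j$ iff $(x-1-h_j)\bmod n<d_j$ (with $\bmod$ taking values in $\{0,\ldots,n-1\}$). Define the allocation of agent $x$ at size $s$ as \[CV_x^s=\{C(x,\underline{t}):\underline{t}\in\mathcal{A}(n,s)\}\cup\{C(x,\underline{t}_j):1\le j\le K,\ x\text{ designated for }\underline{t}_j\}.\] Then for every agent $x\in\{1,\ldots,n\}$, \[\left\lfloor\frac{\binom{n}{s}}{n}\right\rfloor\le|CV_x^s|\le\left\lceil\frac{\binom{n}{s}}{n}\right\rceil,\] so the allocations of any two agents at size $s$ differ by at most one.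
   Context: Agent identifiers are $\{1,\ldots,n\}$, arithmetic on identifiers is modulo $n$ with representatives in $\{1,\ldots,n\}$ (a value $0$ is replaced by $n$). An increment array (IA) of size $s$ for $n$ agents is a tuple $\underline{t}=\langle t_0,\ldots,t_{s-1}\rangle$ of non-negative integers with $\sum t_i=n-s$. Cumulative increments: $\varphi_1=0$, $\varphi_i=\sum_{k=0}^{i-2}(t_k+1)$ for $2\le i\le s+1$. The coalition generated from $x$ is $C(x,\underline{t})=\{x\}\cup\bigcup_{i=2}^{s}\{(x+\varphi_i)\bmod n\}$ (residues in $\{1,\ldots,n\}$). Two IAs of the same size are equivalent ($\approx$) if one is a circular shift of the other; the canonical representative of an equivalence class is its lexicographically smallest member. $\mathcal{E}(n,s)$ is the set of canonical representatives of IAs of size $s$. The period $\pi(\underline{t})$ is the least $p\in\{1,\ldots,s\}$ such that $\underline{t}$ consists of $s/p$ identical consecutive copies of its first $p$ entries. $\mathcal{A}(n,s)=\{\underline{t}\in\mathcal{E}(n,s):\pi(\underline{t})=s\}$ (aperiodic) and $\mathcal{P}(n,s)=\{\underline{t}\in\mathcal{E}(n,s):\pi(\underline{t})<s\}$ (periodic). *)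

(* Defs.v *)
(* Agents are natural numbers in {1,...,n}. *)
From mathcomp Require Import all_boot all_order all_algebra.
Set Implicit Arguments. Unset Strict Implicit. Unset Printing Implicit Defensive.

Definition modrep (n y : nat) : nat := if y %% n == 0 then n else y %% n.

Fixpoint comps (k m : nat) : seq (seq nat) :=
  match k with
  | 0 => if m == 0 then [:: [::]] else [::]
  | k'.+1 => flatten [seq [seq a :: c | c <- comps k' (m - a)] | a <- iota 0 m.+1]
  end.

Definition is_IA (n s : nat) (t : seq nat) : bool :=
  (size t == s) && (sumn t == n - s).

Fixpoint lexle (a b : seq nat) : bool :=
  match a, b with
  | [::], _ => true
  | _ :: _, [::] => false
  | x :: a', y :: b' => (x < y) || ((x == y) && lexle a' b')
  end.

Definition canonical (t : seq nat) : bool :=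
  all (fun i => lexle t (rot i t)) (iota 0 (size t)).

Definition E_set (n s : nat) : seq (seq nat) :=
  [seq t <- comps s (n - s) | is_IA n s t && canonical t].

Definition has_period (t : seq nat) (p : nat) : bool :=
  (p %| size t) && (t == flatten (nseq (size t %/ p) (take p t))).

Definition period (t : seq nat) : nat :=
  head (size t) [seq p <- iota 1 (size t) | has_period t p].

Definition A_set (n s : nat) : seq (seq nat) :=
  [seq t <- E_set n s | period t == s].
Definition P_set (n s : nat) : seq (seq nat) :=
  [seq t <- E_set n s | period t < s].

Definition phi (t : seq nat) (i : nat) : nat :=
  sumn [seq (nth 0 t k).+1 | k <- iota 0 i.-1].

(* coalition C(x,t), represented canonically as a sorted duplicate-free list *)
Definition coalition (n x : nat) (t : seq nat) : seq nat :=
  sort leq (undup (x :: [seq modrep n (x + phi t i) | i <- iota 2 (size t).-1])).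

Definition dval (n s : nat) (t : seq nat) : nat := (n * period t) %/ s.

(* h_j = sum_{i<j} d_i (0-based j) *)
Definition hval (n s : nat) (ts : seq (seq nat)) (j : nat) : nat :=
  sumn [seq dval n s (nth [::] ts i) | i <- iota 0 j].

Definition designated (n s : nat) (ts : seq (seq nat)) (x j : nat) : bool :=
  (((x%:Z - 1 - (hval n s ts j)%:Z) %% n%:Z)%Z < (dval n s (nth [::] ts j))%:Z)%R.

Definition CV (n s : nat) (ts : seq (seq nat)) (x : nat) : seq (seq nat) :=
  undup ([seq coalition n x t | t <- A_set n s] ++
         [seq coalition n x (nth [::] ts j) | j <- iota 0 (size ts) & designated n s ts x j]).

Definition ceil_div (a b : nat) : nat := (a + b.-1) %/ b.

(* Main.v *)
Require Import Defs.
From mathcomp Require Import all_boot all_order all_algebra zify.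
Set Implicit Arguments. Unset Strict Implicit. Unset Printing Implicit Defensive.

Lemma mem_comps k m t : (t \in comps k m) = (size t == k) && (sumn t == m).
Proof.
elim: k m t => [|k IH] m t.
  by case: t => [|a t]; case: m => [|m] //=; rewrite ?inE ?andbF.
rewrite /comps -/comps.
apply/flatten_mapP/idP.
  case=> a; rewrite mem_iota add0n ltnS => /= am /mapP [c]; rewrite IH => /andP[/eqP sc /eqP sm] ->.
  by rewrite /= sc sm eqxx /=; apply/eqP; lia.
case: t => [|a c] //= /andP[sc /eqP sm].
exists a; first by rewrite -[0 :: _]/(iota 0 m.+1) mem_iota; lia.
apply/mapP; exists c => //; rewrite IH -eqSS sc /=; apply/eqP; lia.
Qed.

Lemma uniq_flatten_heads (l : seq nat) (F : nat -> seq (seq nat)) :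
  uniq l -> (forall a, uniq (F a)) -> (forall a t, t \in F a -> head 0 t = a /\ t != [::]) ->
  uniq (flatten (map F l)).
Proof.
move=> ul uF hF; elim: l ul => //= a l IH /andP[al ul].
rewrite cat_uniq uF IH // andbT /=; apply/hasP => -[t /flatten_mapP [b bl tb] ta].
have [h1 _] := hF _ _ ta; have [h2 _] := hF _ _ tb.
by move: al; rewrite -h1 h2 bl.
Qed.

Lemma uniq_comps k m : uniq (comps k m).
Proof.
elim: k m => [|k IH] m; first by case: m.
rewrite /comps -/comps.
apply: uniq_flatten_heads; first exact: iota_uniq.
  by move=> a; rewrite map_inj_uniq // => x y [].
by move=> a t /mapP [c _ ->].
Qed.

Lemma size_comps_sum k m :
  size (comps k.+1 m) = sumn [seq size (comps k (m - a)) | a <- iota 0 m.+1].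
Proof.
rewrite /comps -/comps size_flatten /shape -map_comp; congr sumn; apply: eq_map => a /=.
by rewrite size_map.
Qed.

Lemma size_comps_S k m :
  size (comps k.+1 m.+1) = size (comps k m.+1) + size (comps k.+1 m).
Proof.
rewrite !size_comps_sum -[iota 0 m.+2]/(0 :: iota 1 m.+1).
have -> : iota 1 m.+1 = map (addn 1) (iota 0 m.+1) by rewrite -iotaDl.
rewrite /= -map_comp subn0; congr (_ + _); congr sumn; apply: eq_map => a /=.
Qed.

Lemma size_comps k m : size (comps k.+1 m) = 'C(m + k, k).
Proof.
elim: k m => [|k IH] m.
  rewrite bin0; elim: m => [|m IHm] //; by rewrite size_comps_S IHm.
elim: m => [|m IHm]; first by rewrite size_comps_sum (_ : iota 0 1 = [:: 0]) // map_cons sub0n IH add0n !binn.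

rewrite size_comps_S IH IHm (_ : m.+1 + k.+1 = (m + k.+1).+1) ?addSn // binS addnC.
by rewrite addnS.
Qed.

Lemma lexle_refl a : lexle a a.
Proof. by elim: a => //= x a ->; rewrite eqxx orbT. Qed.

Lemma lexle_trans a b c : lexle a b -> lexle b c -> lexle a c.
Proof.
elim: a b c => [|x a IH] [|y b] [|z c] //=.
case/orP=> [xy|/andP[/eqP-> ab]]; case/orP=> [yz|/andP[/eqP<- bc]].
- by rewrite (ltn_trans xy yz).
- by rewrite xy.
- by rewrite yz.
- by rewrite eqxx (IH _ _ ab bc) orbT.
Qed.

Lemma lexle_total a b : lexle a b || lexle b a.
Proof.
elim: a b => [|x a IH] [|y b] //=.
case: (ltngtP x y) => //= ->; by rewrite eqxx.
Qed.

Lemma lexle_anti a b : lexle a b -> lexle b a -> a = b.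
Proof.
elim: a b => [|x a IH] [|y b] //=.
case: (ltngtP x y) => //= -> ab ba; by rewrite (IH _ ab ba).
Qed.

Lemma exists_min (L : seq (seq nat)) : L != [::] -> exists2 m, m \in L & all (lexle m) L.
Proof.
elim: L => [|a L IH] // _.
case: (altP (L =P [::])) => [->|/IH [m mL allm]].
  by exists a; rewrite ?inE //= lexle_refl.
case/orP: (lexle_total a m) => am.
  exists a; first exact: mem_head.
  rewrite /= lexle_refl /=; apply/allP => y yL; apply: lexle_trans am _.
  exact: (allP allm).
exists m; first by rewrite inE mL orbT.
by rewrite /= am.
Qed.

Lemma rot_in_orbit (t : seq nat) j : 0 < size t -> j <= size t ->
  rot j t \in [seq rot i t | i <- iota 0 (size t)].
Proof.
move=> s0 js; case: (ltngtP j (size t)) js => // [jlt|->] _.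
  by apply: map_f; rewrite mem_iota.
by rewrite rot_size; apply/mapP; exists 0; rewrite ?mem_iota ?rot0.
Qed.

Lemma rot_rot_in_orbit (t : seq nat) i j : 0 < size t -> i <= size t -> j <= size t ->
  rot j (rot i t) \in [seq rot k t | k <- iota 0 (size t)].
Proof.
move=> s0 hi hj; rewrite rot_add_mod //; apply: rot_in_orbit => //.
case: ifP => //; lia.
Qed.

Lemma exists_canon (t : seq nat) : 0 < size t ->
  exists2 i, i < size t & canonical (rot i t).
Proof.
move=> s0.
have [|m mL allm] := exists_min (L := [seq rot i t | i <- iota 0 (size t)]).
  by case: (size t) s0.
case/mapP: mL allm => i; rewrite mem_iota add0n => /= ilt -> allm.
exists i => //; apply/allP => j; rewrite mem_iota size_rot add0n => /= jlt.
apply: (allP allm); apply: rot_rot_in_orbit => //; exact: ltnW.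
Qed.

Lemma canon_uniq (e : seq nat) i : canonical e -> canonical (rot i e) -> rot i e = e.
Proof.
move=> ce cr; case: (leqP (size e) i) => [/rot_oversize //|ilt].
case: i ilt cr => [|i] ilt cr; first by rewrite rot0.
apply: lexle_anti.
  have := allP cr (size e - i.+1); rewrite mem_iota size_rot add0n.
  have -> : rot (size e - i.+1) (rot i.+1 e) = e.
    by rewrite -(size_rot i.+1 e) -/(rotr i.+1 (rot i.+1 e)) rotK.
  by apply; lia.
by apply: (allP ce); rewrite mem_iota.
Qed.

Lemma flatten_nseq_comm (b : seq nat) k : flatten (nseq k b) ++ b = b ++ flatten (nseq k b).
Proof. by elim: k => [|k IH] /=; rewrite ?cats0 // -catA IH. Qed.

Lemma size_flatten_nseq (b : seq nat) k : size (flatten (nseq k b)) = k * size b.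
Proof. by elim: k => [|k IH] //=; rewrite size_cat IH mulSn. Qed.

Lemma nth_flatten_nseq (b : seq nat) k i : 0 < size b -> i < k * size b ->
  nth 0 (flatten (nseq k b)) i = nth 0 b (i %% size b).
Proof.
move=> b0; elim: k i => [|k IH] i //= ilt.
rewrite nth_cat; case: ltnP => ib; first by rewrite modn_small.
rewrite IH; last by rewrite mulSn in ilt; lia.
by rewrite -{2}(subnK ib) modnDr.
Qed.

Lemma has_period_rot (e : seq nat) q : 0 < size e -> has_period e q -> rot q e = e.
Proof.
move=> s0 /andP[qd /eqP E].
have qs : q <= size e by apply: dvdn_leq.
have q0 : 0 < q by case: q qd qs {E} => //; rewrite dvd0n; case: (size e) s0.
have sb : size (take q e) = q by rewrite size_takel.
move: E; set b := take q e; set k := size e %/ q => E.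
have k0 : 0 < k by rewrite divn_gt0.
by rewrite E -(prednK k0) /= -{1}sb rot_size_cat flatten_nseq_comm.
Qed.

Lemma rot_has_period (e : seq nat) q : 0 < q -> q %| size e -> rot q e = e -> has_period e q.
Proof.
move=> q0 qd R; rewrite /has_period.
case: (posnP (size e)) => [se|s0]. by rewrite (size0nil se) /= dvdn0 div0n.
have qs : q <= size e by apply: dvdn_leq.
have sh : forall i, i + q < size e -> nth 0 e (i + q) = nth 0 e i.
  move=> i iq; rewrite -{2}R /rot nth_cat size_drop ifT; last by lia.
  by rewrite nth_drop addnC.
have md : forall i, i < size e -> nth 0 e i = nth 0 e (i %% q).
  elim/ltn_ind=> i IH ilt; case: (ltnP i q) => iq; first by rewrite modn_small.
  rewrite -(subnK iq) sh; last by lia.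
  by rewrite IH ?modnDr //; lia.
apply/andP; split => //; apply/eqP; apply: (@eq_from_nth _ 0).
  by rewrite size_flatten_nseq size_takel // divnK.
move=> i ilt; rewrite nth_flatten_nseq ?size_takel ?divnK // md // nth_take //.
exact: ltn_pmod.
Qed.

Lemma head_filter_iota (P : pred nat) a n d : has P (iota a n) ->
  let x := head d [seq p <- iota a n | P p] in
  [/\ a <= x < a + n, P x & forall y, a <= y < x -> ~~ P y].
Proof.
elim: n a => [|n IH] a //= /orP [Pa|hP]; rewrite ?Pa /=.
  split => //=; first lia.
  move=> y; lia.
case: ifP => Pa.
  split => //=; first lia.
  move=> y; lia.
have [h1 h2 h3] := IH _ hP; split => //; first lia.
move=> y yr; case: (ltngtP a y) => [ay||ay].
- apply: h3; lia.
- lia.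
- by rewrite -ay Pa.
Qed.

Lemma period_spec (e : seq nat) : 0 < size e ->
  [/\ 0 < period e <= size e, has_period e (period e) &
      forall q, 0 < q < period e -> ~~ has_period e q].
Proof.
move=> s0.
have hs : has (has_period e) (iota 1 (size e)).
  apply/hasP; exists (size e); first by rewrite mem_iota; lia.
  by apply: rot_has_period => //; rewrite rot_size.
have [h1 h2 h3] := head_filter_iota (size e) hs.
rewrite /period; split => //.
Qed.

Lemma rot_sub (e : seq nat) a b : a <= b -> b <= size e -> rot a e = e -> rot b e = e ->
  rot (b - a) e = e.
Proof.
move=> ab bs ra rb; rewrite -{1}ra -rotD; last by lia.
by rewrite subnK.
Qed.

Lemma min_rot (e : seq nat) q : 0 < q <= size e -> rot q e = e ->
  exists2 q', 0 < q' <= q & (q' %| size e) && (rot q' e == e).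
Proof.
move=> qr rq.
pose P := fun r => (0 < r <= size e) && (rot r e == e).
have exP : exists r, P r by exists q; rewrite /P qr rq eqxx.
pose p := ex_minn exP.
have [Pp minp] : P p /\ forall r, P r -> p <= r.
  by rewrite /p; case: ex_minnP.
case/andP: Pp => /andP [p0 ps] /eqP rp.
have key : forall b, b <= size e -> rot b e = e -> p %| b.
  elim/ltn_ind=> b IH bs rb.
  case: (ltnP b p) => bp.
    case: (posnP b) => [->|b0]; first exact: dvdn0.
    have := minp b; rewrite /P b0 bs rb eqxx => /(_ isT); lia.
  have h : p %| b - p by apply: IH; [lia|lia|exact: rot_sub].
  by rewrite -(subnK bp) dvdn_add.
exists p.
  by rewrite p0 /=; apply: minp; rewrite /P qr rq eqxx.
by rewrite key ?rot_size //= rp eqxx.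
Qed.

Lemma rot_ne (e : seq nat) q : 0 < size e -> 0 < q < period e -> rot q e != e.
Proof.
move=> s0 qr; apply/eqP => rq.
have [/andP[p0 ps] hp minp] := period_spec s0.
have [q' q'r /andP [dq' /eqP rq']] := min_rot (q := q) (e := e) ltac:(lia) rq.
have hq : 0 < q' by case/andP: q'r.
have := minp q'; rewrite rot_has_period //.
move=> /(_ ltac:(lia)) //.
Qed.

Lemma rot_mul (e : seq nat) p k : rot p e = e -> k * p <= size e -> rot (k * p) e = e.
Proof.
move=> rp; elim: k => [|k IH] ks; first by rewrite rot0.
rewrite mulSn rotD // IH ?rp //; rewrite mulSn in ks; lia.
Qed.

Lemma rot_mod (e : seq nat) p i : 0 < p -> rot p e = e -> i <= size e -> rot i e = rot (i %% p) e.
Proof.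
move=> p0 rp hi; rewrite {1}(divn_eq i p) addnC rotD; last by rewrite addnC -divn_eq.
rewrite rot_mul //; apply: leq_trans hi; rewrite {2}(divn_eq i p); exact: leq_addr.
Qed.

Lemma orbit_size (e : seq nat) : 0 < size e ->
  size (undup [seq rot i e | i <- iota 0 (size e)]) = period e.
Proof.
move=> s0; have [/andP[p0 ps] hp minp] := period_spec s0.
have rp := has_period_rot s0 hp.
set p := period e in p0 ps hp minp rp *.
have uLp : uniq [seq rot i e | i <- iota 0 p].
  rewrite map_inj_in_uniq ?iota_uniq // => i j; rewrite !mem_iota !add0n /= => ip jp.
  wlog ij : i j ip jp / i <= j.
    move=> H; case: (leqP i j) => [|/ltnW] h E; first exact: H.
    by apply/esym/H.
  move=> E; case: (ltngtP i j) ij => // ilt _.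
  have : rot (j - i) e = e.
    apply: (@rot_inj i); rewrite -rot_rot -rotD; last by lia.
    by rewrite subnK ?E // ltnW.
  move=> R; have := @rot_ne e (j - i) s0; rewrite R eqxx; move=> /(_ ltac:(lia)) //.
transitivity (size [seq rot i e | i <- iota 0 p]); last by rewrite size_map size_iota.
apply: perm_size; apply: uniq_perm => //; first exact: undup_uniq.
move=> x; rewrite mem_undup; apply/mapP/mapP => -[i]; rewrite !mem_iota !add0n /= => ilt ->.
  exists (i %% p); first by rewrite mem_iota ltn_pmod.
  by apply: rot_mod => //; exact: ltnW.
by exists i; rewrite // mem_iota; lia.
Qed.

Lemma sumn_rot i (t : seq nat) : sumn (rot i t) = sumn t.
Proof. by apply: perm_sumn; rewrite perm_rot. Qed.

Lemma sum_bool_count (T : Type) (r : seq T) (b : pred T) :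
  \sum_(x <- r) (b x : nat) = count b r.
Proof. by elim: r => [|x r IH]; rewrite ?big_nil ?big_cons //= IH. Qed.

Lemma mem_E n s t : (t \in E_set n s) = [&& size t == s, sumn t == n - s & canonical t].
Proof.
rewrite /E_set mem_filter mem_comps /is_IA.
by case: (size t == s); case: (sumn t == n - s); case: (canonical t).
Qed.

Lemma uniq_E n s : uniq (E_set n s).
Proof. exact/filter_uniq/uniq_comps. Qed.

Definition orb (e t : seq nat) := t \in [seq rot i e | i <- iota 0 (size e)].

Lemma count_orb_I n s e : 0 < s -> e \in E_set n s ->
  count (orb e) (comps s (n - s)) = period e.
Proof.
move=> s0; rewrite mem_E => /and3P [/eqP se /eqP sme ce].
rewrite -orbit_size ?se // -size_filter; apply: perm_size.
apply: uniq_perm; [exact/filter_uniq/uniq_comps|exact: undup_uniq|].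
move=> x; rewrite mem_filter mem_undup /orb se andb_idr // => /mapP [i _ ->].
by rewrite mem_comps size_rot sumn_rot se sme !eqxx.
Qed.

Lemma count_orb_E n s t : 0 < s -> t \in comps s (n - s) ->
  count (orb^~ t) (E_set n s) = 1.
Proof.
move=> s0; rewrite mem_comps => /andP [/eqP st /eqP smt].
have st0 : 0 < size t by rewrite st.
have [i ilt ce0] := exists_canon st0.
set e0 := rot i t in ce0.
have e0E : e0 \in E_set n s by rewrite mem_E size_rot sumn_rot st smt ce0 !eqxx.
rewrite (@eq_in_count _ _ (pred1 e0)); first by rewrite count_uniq_mem ?uniq_E // e0E.
move=> e eE /=; apply/idP/idP.
  case/mapP => j _ te; move: eE; rewrite mem_E => /and3P [/eqP se _ ce].
  have E0 : rot (rot_add e j i) e = e0 by rewrite /e0 te rot_rot_add.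
  have h := @canon_uniq e (rot_add e j i) ce; rewrite E0 in h.
  by rewrite /= (h ce0).
move/eqP=> ->; rewrite /orb.
have -> : t = rot (size e0 - i) e0 by rewrite /e0 -/(rotr i (rot i t)) rotK.
by apply: rot_in_orbit; rewrite size_rot // leq_subr.
Qed.

Lemma sum_period n s : 0 < s ->
  sumn [seq period e | e <- E_set n s] = size (comps s (n - s)).
Proof.
move=> s0.
rewrite sumnE big_map -sum1_size.
transitivity (\sum_(t <- comps s (n - s)) \sum_(e <- E_set n s) (orb e t : nat)); last first.
  by apply: eq_big_seq => t tI; rewrite sum_bool_count count_orb_E.
rewrite exchange_big; apply: eq_big_seq => e eE.
by rewrite sum_bool_count count_orb_I.
Qed.

Lemma dvd_period (e : seq nat) n : 0 < size e -> size e <= n -> sumn e = n - size e ->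
  size e %| n * period e.
Proof.
move=> s0 sn se.
have [/andP[p0 ps] hp _] := period_spec s0.
move: hp; set p := period e => /andP [pd /eqP E].
have sb : size (take p e) = p by rewrite size_takel.
move: E se; set b := take p e; set k := size e %/ p => E.
rewrite {1}E sumn_flatten map_nseq sumn_nseq => se.
have sk : size e = k * p by rewrite divnK.
have -> : n * p = size e * (p + sumn b).
  have -> : n = size e + sumn b * k by lia.
  rewrite sk; nia.
exact: dvdn_mulr.
Qed.

Lemma sum_dval n s : 0 < s <= n ->
  sumn [seq dval n s e | e <- E_set n s] = 'C(n, s).
Proof.
case/andP=> s0 sn.
apply/eqP; rewrite -(eqn_pmul2r s0); apply/eqP.
have -> : sumn [seq dval n s e | e <- E_set n s] * s = n * sumn [seq period e | e <- E_set n s].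
  rewrite !sumnE !big_map big_distrl big_distrr /=; apply: eq_big_seq => e.
  rewrite mem_E => /and3P [/eqP se /eqP sme _].
  rewrite /dval divnK // -se; apply: dvd_period; rewrite ?se //.
rewrite sum_period // -(prednK s0) size_comps prednK //.
have -> : n - s + s.-1 = n.-1 by lia.
by rewrite mul_bin_diag prednK // mulnC.
Qed.

Lemma sumn_mapS (l : seq nat) : sumn (map succn l) = sumn l + size l.
Proof. by elim: l => //= a l ->; rewrite addSn addnS addnA. Qed.

Lemma phiE (t : seq nat) i : i.-1 <= size t -> phi t i = sumn (take i.-1 t) + i.-1.
Proof.
move=> h; rewrite /phi (_ : [seq (nth 0 t k).+1 | k <- iota 0 i.-1] =
   map succn [seq nth 0 t k | k <- iota 0 i.-1]); last by rewrite -map_comp.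
by rewrite map_nth_iota0 // sumn_mapS size_takel.
Qed.

Lemma phiS (t : seq nat) i : phi t i.+2 = phi t i.+1 + (nth 0 t i).+1.
Proof.
have E : iota 0 i.+1 = iota 0 i ++ [:: i] by rewrite -addn1 iotaD.
by rewrite /phi [in LHS]succnK E map_cat sumn_cat /= addn0.
Qed.

Lemma phi1 (t : seq nat) : phi t 1 = 0.
Proof. by []. Qed.

Lemma sumn_take_le (t : seq nat) k : sumn (take k t) <= sumn t.
Proof. by rewrite -{2}(cat_take_drop k t) sumn_cat leq_addr. Qed.

Lemma sumn_take_S (t : seq nat) k : k < size t -> sumn (take k.+1 t) = sumn (take k t) + nth 0 t k.
Proof. by move=> h; rewrite (take_nth 0 h) -cats1 sumn_cat /= addn0. Qed.

Lemma modrep_small n x : 0 < x <= n -> modrep n x = x.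
Proof.
case/andP=> x0 xn; rewrite /modrep; case: (ltngtP x n) xn => // [xlt|->] _.
  by rewrite modn_small // ifN //; rewrite -lt0n.
by rewrite modnn.
Qed.

Lemma modrep_inj n x a b : 0 < n -> a < n -> b < n ->
  modrep n (x + a) = modrep n (x + b) -> a = b.
Proof.
move=> n0 an bn; rewrite /modrep => E0.
have h1 := ltn_pmod (x + a) n0; have h2 := ltn_pmod (x + b) n0.
have E : (x + a) %% n = (x + b) %% n.
  move: E0; case: ifP => /eqP ea; case: ifP => /eqP eb; lia.
move/eqP: E; rewrite eqn_modDl modn_small // modn_small // => /eqP //.
Qed.

Lemma sorted_iota_adj (R : rel nat) a n : (forall i, a <= i -> i.+1 < a + n -> R i i.+1) ->
  sorted R (iota a n).
Proof.
elim: n a => [|n IH] a //= h.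
case: n IH h => [|n] IH h //=.
rewrite h ?leqnn //; last by lia.
have := IH a.+1; rewrite /= => -> // i ai il; apply: h; lia.
Qed.

Lemma coalition_mem n x t : 1 <= x <= n -> 0 < size t ->
  coalition n x t =i [seq modrep n (x + phi t i) | i <- iota 1 (size t)].
Proof.
move=> xr s0 y; rewrite /coalition mem_sort mem_undup -(prednK s0) /= addn0 modrep_small //.
Qed.

Lemma coalition_inj n s x t t' : 0 < s <= n -> 1 <= x <= n -> is_IA n s t -> is_IA n s t' ->
  coalition n x t = coalition n x t' -> t = t'.
Proof.
case/andP=> s0 sn xr /andP [/eqP st /eqP smt] /andP [/eqP st' /eqP smt'] C.
have n0 : 0 < n by lia.
have phlt : forall u, size u = s -> sumn u = n - s -> forall i, i \in iota 1 s -> phi u i < n.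
  move=> u su smu i; rewrite mem_iota => /andP[i1 i2].
  rewrite phiE; last by lia.
  have := sumn_take_le u i.-1; lia.
have srt : forall u, sorted ltn [seq phi u i | i <- iota 1 s].
  move=> u; rewrite sorted_map; apply: sorted_iota_adj => i i1 _ /=.
  by rewrite -(prednK i1) phiS; lia.
have memE : forall u u', size u = s -> sumn u = n - s -> size u' = s -> sumn u' = n - s ->
    coalition n x u = coalition n x u' ->
    {subset [seq phi u i | i <- iota 1 s] <= [seq phi u' i | i <- iota 1 s]}.
  move=> u u' su smu su' smu' Cu y /mapP [i hi ->].
  have : modrep n (x + phi u i) \in coalition n x u'.
    rewrite -Cu coalition_mem ?su //; exact: map_f.
  rewrite coalition_mem ?su' // => /mapP [j hj E].
  have -> : phi u i = phi u' j.
    by apply: (modrep_inj n0 _ _ E); apply: phlt; rewrite // -?su -?su'.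
  exact: map_f.
have Eq : [seq phi t i | i <- iota 1 s] = [seq phi t' i | i <- iota 1 s].
  apply: (irr_sorted_eq ltn_trans ltnn (srt t) (srt t')) => y; apply/idP/idP.
    exact: memE.
  exact: memE.
have Etk : forall k, k <= s -> sumn (take k t) = sumn (take k t').
  move=> k ks; case: (ltngtP k s) ks => // [kl|->] _; last first.
    by rewrite !take_oversize ?st ?st' // smt smt'.
  have := congr1 (fun l => nth 0 l k) Eq; rewrite !(nth_map 0) ?size_iota // nth_iota //.
  rewrite !phiE /=; rewrite ?add0n; lia.
apply: (@eq_from_nth _ 0); first by rewrite st st'.
move=> k; rewrite st => ks.
have := Etk k.+1 ks; rewrite !sumn_take_S ?st ?st' // Etk; [lia|lia].
Qed.

Definition fcnt n r D := D %/ n + (r < D %% n).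

Lemma fcnt_step n r h d : 0 < n -> r < n -> d <= n ->
  fcnt n r (h + d) = fcnt n r h + ((r + n - h %% n) %% n < d).
Proof.
move=> n0 rn dn; rewrite /fcnt {1 2}(divn_eq h n).
set q := h %/ n; set b := h %% n.
have bn : b < n by apply: ltn_pmod.
rewrite -addnA divnMDl // modnMDl.
case: (ltnP (b + d) n) => bd.
  rewrite (divn_small bd) (modn_small bd).
  case: (leqP b r) => br.
    rewrite (_ : r + n - b = (r - b) + n); last by lia.
    rewrite modnDr modn_small; last by lia.
    case: (ltnP r b); case: (ltnP r (b + d)); case: (ltnP (r - b) d); lia.
  rewrite modn_small; last by lia.
  case: (ltnP r b); case: (ltnP r (b + d)); case: (ltnP (r + n - b) d); lia.
have E : b + d = 1 * n + (b + d - n) by lia.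
have bdn : b + d - n < n by lia.
rewrite E divnMDl // modnMDl (divn_small bdn) (modn_small bdn).
case: (leqP b r) => br.
  rewrite (_ : r + n - b = (r - b) + n); last by lia.
  rewrite modnDr modn_small; last by lia.
  case: (ltnP r b); case: (ltnP r (b + d - n)); case: (ltnP (r - b) d); lia.
rewrite modn_small; last by lia.
case: (ltnP r b); case: (ltnP r (b + d - n)); case: (ltnP (r + n - b) d); lia.
Qed.

Lemma fcnt_bounds n r D : 0 < n -> D %/ n <= fcnt n r D <= (D + n.-1) %/ n.
Proof.
move=> n0; rewrite /fcnt leq_addr /=.
have E := divn_eq D n.
set q := D %/ n in E *; set b := D %% n in E *.
have bn : b < n by apply: ltn_pmod.
have -> : D + n.-1 = q * n + (b + n.-1) by rewrite E addnA.
rewrite divnMDl // leq_add2l.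
case: (posnP b) => [->|b0].
  by rewrite ltn0 divn_small //; lia.
have -> : b + n.-1 = 1 * n + b.-1 by lia.
by rewrite divnMDl // divn_small; lia.
Qed.

Lemma hvalS n s ts j : hval n s ts j.+1 = hval n s ts j + dval n s (nth [::] ts j).
Proof.
rewrite /hval (_ : iota 0 j.+1 = iota 0 j ++ [:: j]); last by rewrite -addn1 iotaD.
by rewrite map_cat sumn_cat /= addn0.
Qed.

Lemma desig_iff n s ts x j : 0 < n -> 1 <= x <= n ->
  designated n s ts x j =
  ((x.-1 + n - hval n s ts j %% n) %% n < dval n s (nth [::] ts j)).
Proof.
move=> n0 xr; rewrite /designated.
set h := hval n s ts j; set d := dval n s (nth [::] ts j).
have bn : h %% n < n by apply: ltn_pmod.
have -> : (x%:Z - 1 - h%:Z = (- (h %/ n)%:Z - 1) * n%:Z + (x.-1 + n - h %% n)%:Z)%R.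
  have E := divn_eq h n; move: E bn; set q := h %/ n; set b := h %% n => E bn'.
  rewrite E; lia.
rewrite modzMDl modz_nat ltz_nat //.
Qed.

Lemma count_desig n s ts x K : 0 < n -> 1 <= x <= n ->
  (forall j, j < K -> dval n s (nth [::] ts j) <= n) ->
  count (designated n s ts x) (iota 0 K) = fcnt n x.-1 (hval n s ts K).
Proof.
move=> n0 xr hd; elim: K hd => [|K IH] hd.
  by rewrite /fcnt /hval /= div0n mod0n.
rewrite (_ : iota 0 K.+1 = iota 0 K ++ [:: K]); last by rewrite -addn1 iotaD.
rewrite count_cat IH; last by move=> j jK; apply: hd; lia.
rewrite hvalS fcnt_step //; last exact: hd.
  by rewrite /= desig_iff // addn0.
lia.
Qed.

Lemma sumn_map_const (T : eqType) (f : T -> nat) c (l : seq T) :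
  (forall y, y \in l -> f y = c) -> sumn (map f l) = c * size l.
Proof.
elim: l => [|a l IH] h /=; first by rewrite muln0.
rewrite h ?mem_head // IH ?mulnS // => y yl; apply: h; by rewrite inE yl orbT.
Qed.

Lemma sumn_split (T : Type) (f : T -> nat) (a : pred T) (l : seq T) :
  sumn (map f l) = sumn (map f (filter a l)) + sumn (map f (filter (predC a) l)).
Proof.
elim: l => [|y l IH] //=; case: (a y) => /=; rewrite IH; lia.
Qed.

Unset Implicit Arguments.

Theorem theorem9 (n s : nat) (ts : seq (seq nat)) :
  1 <= n -> 1 <= s <= n ->
  uniq ts -> perm_eq ts (P_set n s) ->
  forall x : nat, 1 <= x <= n ->
    ('C(n, s) %/ n <= size (CV n s ts x)) && (size (CV n s ts x) <= ceil_div 'C(n, s) n).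
Proof.
move=> n0 /andP [s0 sn] uts pts x xr.
have sr : 0 < s <= n by rewrite s0 sn.
have Eprop : forall e, e \in E_set n s -> [/\ size e = s, sumn e = n - s & period e <= s].
  move=> e; rewrite mem_E => /and3P [/eqP se /eqP sme _]; split => //.
  have [/andP[_ ps] _ _] := period_spec (e := e) ltac:(by rewrite se).
  by rewrite -se.
have tsP : forall t, t \in ts -> t \in E_set n s /\ period t < s.
  by move=> t; rewrite (perm_mem pts) mem_filter => /andP [? ?].
have dle : forall e, e \in E_set n s -> dval n s e <= n.
  move=> e /Eprop [_ _ ps]; rewrite /dval.
  apply: leq_trans (leq_div2r s (leq_mul (leqnn n) ps)) _.
  by rewrite mulnK.
set K := size ts.
set L := [seq j <- iota 0 K | designated n s ts x j].
have cE : size L = fcnt n x.-1 (hval n s ts K).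
  rewrite size_filter count_desig // => j jK.
  by apply: dle; case: (tsP (nth [::] ts j)) => //; exact: mem_nth.
have DE : hval n s ts K = sumn [seq dval n s t | t <- P_set n s].
  rewrite /hval (map_comp (dval n s) (nth [::] ts)) -/(mkseq _ _) mkseq_nth.
  by apply: perm_sumn; apply: perm_map.
set A := A_set n s.
have CE : 'C(n, s) = size A * n + hval n s ts K.
  rewrite -(sum_dval sr) (sumn_split _ (fun t => period t == s)) DE mulnC.
  congr (_ + _).
    apply: sumn_map_const => e; rewrite mem_filter => /andP [/eqP pe _].
    by rewrite /dval pe mulnK.
  congr sumn; congr map; apply: eq_in_filter => e /Eprop [_ _ ps] /=.
  by rewrite ltn_neqAle ps andbT.
have sCV : size (CV n s ts x) = size A + size L.
  rewrite /CV.
  have -> : [seq coalition n x (nth [::] ts j) | j <- iota 0 K & designated n s ts x j] =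
            map (coalition n x) (map (nth [::] ts) L) by rewrite -map_comp.
  have inE' : forall u, u \in A ++ map (nth [::] ts) L -> u \in E_set n s.
    move=> u; rewrite mem_cat => /orP [|/mapP [j jL ->]].
      by rewrite mem_filter => /andP [].
    move: jL; rewrite mem_filter mem_iota add0n => /andP [_ /= jK].
    by case: (tsP (nth [::] ts j)) => //; exact: mem_nth.
  rewrite -map_cat undup_id; last first.
    rewrite map_inj_in_uniq.
      rewrite cat_uniq filter_uniq ?uniq_E //=; apply/andP; split.
        apply/hasP => -[u /mapP [j jL ->]]; rewrite mem_filter => /andP [/eqP pe _].
        move: jL; rewrite mem_filter mem_iota add0n => /andP [_ /= jK].
        by case: (tsP (nth [::] ts j)); [exact: mem_nth|rewrite pe ltnn].
      rewrite map_inj_in_uniq ?filter_uniq ?iota_uniq // => i j.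
      rewrite !mem_filter !mem_iota !add0n => /andP [_ /= iK] /andP [_ /= jK] /eqP.
      by rewrite nth_uniq // => /eqP.
    move=> u v /inE' uE /inE' vE; apply: (coalition_inj sr xr).
      rewrite mem_E in uE; rewrite /is_IA; case/and3P: uE => /eqP -> /eqP -> _; by rewrite !eqxx.
    rewrite mem_E in vE; rewrite /is_IA; case/and3P: vE => /eqP -> /eqP -> _; by rewrite !eqxx.
  by rewrite size_map size_cat size_map.
rewrite sCV cE /ceil_div CE.
have -> : size A * n + hval n s ts K + n.-1 = size A * n + (hval n s ts K + n.-1) by rewrite addnA.
rewrite !divnMDl // !leq_add2l.
exact: fcnt_bounds.
Qed.
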